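(* For every $\varepsilon\in(0,1)$ and $\beta\in(0,\varepsilon/400)$ there exists $k_0$ such that for all $k\ge k_0$ and all real $a\ge 1/2$ the following holds. Let $G$ be a graph with $\delta(G)\ge (a+\varepsilon)k$ and $|G|\le 100k$. Then there exists a subgraph $H$ of $G$, obtained by deleting at most $200\beta|G|$ vertices, such that $\delta(H)\ge (a+\varepsilon-400\beta)k$ and each connected component of $H$ is $(\beta^2/20000)$-cut-dense.
   Context: Graphs are finite and simple; $|G|$ is the number of vertices and $\delta(G)$ the minimum degree. For $\rho\ge 0$, a graph $G$ is $\rho$-cut-dense if there is no partition of $V(G)$ into two sets $A,B$ with $e(A,B)<\rho|A||B|$, where $e(A,B)$ is the number of edges with one endpoint in $A$ and the other in $B$. *)

(* Defs.v *)
From mathcomp Require Import all_boot all_order all_algebra.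
Set Implicit Arguments. Unset Strict Implicit. Unset Printing Implicit Defensive.
Import Order.TTheory GRing.Theory Num.Theory.
Local Open Scope ring_scope.

Definition simple_graph (T : finType) (e : rel T) : Prop :=
  symmetric e /\ irreflexive e.

Definition deg (T : finType) (e : rel T) (x : T) : nat := #|[set y | e x y]|.

(* e(A,B): number of edges with one endpoint in A and the other in B
   (A, B disjoint in all uses), counted as ordered pairs (a,b), a in A, b in B. *)
Definition e_between (T : finType) (e : rel T) (A B : {set T}) : nat :=
  #|[set p : T * T | (p.1 \in A) && (p.2 \in B) && e p.1 p.2]|.

Definition cut_dense (R : realFieldType) (rho : R) (T : finType) (e : rel T)
    (C : {set T}) : Prop :=
  forall A : {set T}, A \subset C ->
    rho * (#|A|%:R) * (#|C :\: A|%:R) <= (e_between e A (C :\: A))%:R.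

Definition subgraph_of (T : finType) (e : rel T) (S : {set T}) (f : rel T) : Prop :=
  symmetric f /\
  (forall x y, f x y -> e x y) /\
  (forall x y, f x y -> (x \in S) && (y \in S)).

Definition component (T : finType) (S : {set T}) (f : rel T) (x : T) : {set T} :=
  [set y in S | connect f x y].

(* Main.v *)
Require Import Defs.
From mathcomp Require Import all_boot all_order all_algebra.
From mathcomp Require Import reals.
From mathcomp Require Import ring lra zify.
Import Order.TTheory GRing.Theory Num.Theory.
Set Implicit Arguments. Unset Strict Implicit. Unset Printing Implicit Defensive.
Local Open Scope ring_scope.

Lemma exists_min (I : finType) (R : realDomainType) (P : pred I) (f : I -> R) i0 :
  P i0 -> exists2 i, P i & forall j, P j -> f i <= f j.
Proof. move=> Pi0. case: (@Order.TotalTheory.arg_minP _ R I i0 P f Pi0) => i Pi H. by exists i. Qed.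

Lemma cardsU_le (T : finType) (A B : {set T}) : (#|A :|: B| <= #|A| + #|B|)%N.
Proof. by rewrite cardsU leq_subr. Qed.

Definition Fr (T : finType) (F : {set T * T}) : rel T := fun x y => (x, y) \in F.

Definition P1 (T : finType) (e : rel T) (S : {set T}) :=
  [set p : T * T | e p.1 p.2 && (p.1 \notin S) && (p.2 \in S)].
Definition P2 (T : finType) (e : rel T) (S : {set T}) (F : {set T * T}) :=
  [set p : T * T | e p.1 p.2 && (p.1 \in S) && (p.2 \in S) && (p \notin F)].
Definition Xc (T : finType) (e : rel T) (S : {set T}) (F : {set T * T}) :=
  (#|P1 e S| + #|P2 e S F|)%N.
Definition Qc (T : finType) (S : {set T}) (F : {set T * T}) :=
  #|[set p : T * T | (p.1 \in S) && (p.2 \in S) && ~~ connect (Fr F) p.1 p.2]|.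
Definition domb (T : finType) (e : rel T) (S : {set T}) (F : {set T * T}) :=
  [forall p, (p \in F) ==> [&& e p.1 p.2, p.1 \in S, p.2 \in S & ((p.2, p.1) \in F)]].

Lemma dombP (T : finType) (e : rel T) S F : domb e S F ->
  forall u v, (u, v) \in F -> [/\ e u v, u \in S, v \in S & (v, u) \in F].
Proof.
move=> /forallP H u v uvF; move: (H (u, v)); rewrite uvF /=.
by case/and4P.
Qed.

Definition Fdel (T : finType) (F : {set T * T}) x :=
  [set p in F | (p.1 != x) && (p.2 != x)].

Lemma Xc_del (T : finType) (e : rel T) S F x : domb e S F -> x \in S ->
  (Xc e (S :\ x) (Fdel F x) <= Xc e S F + deg (Fr F) x)%N.
Proof.
move=> dom xS.
set Nf := [set (x, y) | y in [set y | Fr F x y]].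
set Nn := [set p : T * T | (p.1 == x) && e p.1 p.2 && (p.2 \in S) && (p \notin F)].
have s1 : P1 e (S :\ x) \subset P1 e S :|: Nf :|: Nn.
  apply/subsetP => -[u v]; rewrite !inE /= negb_and negbK.
  case/andP => /andP[euv /orP[/eqP ux | uS]] /andP[vx vS]; last by rewrite euv uS vS.
  subst u; case vF : ((x, v) \in F).
    by apply/orP; left; apply/orP; right; apply/imsetP; exists v => //; rewrite inE.
  by apply/orP; right; rewrite ?inE /= eqxx euv vS ?vF.
have s2 : P2 e (S :\ x) (Fdel F x) :|: Nn \subset P2 e S F.
  apply/subsetP => -[u v]; rewrite !inE /=.
  case/orP => [|/andP[/andP[/andP[/eqP -> ->] ->] ->]]; last by rewrite xS.
  by case/andP => /and3P[/and3P[euv ux uS] vx vS]; rewrite euv uS vS ux vx !andbT.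
have d2 : [disjoint P2 e (S :\ x) (Fdel F x) & Nn].
  apply/pred0P => -[u v] /=; rewrite !inE /=.
  by case: (u == x); rewrite /= ?andbF.
have c2 := subset_leq_card s2.
rewrite cardsU (disjoint_setI0 d2) cards0 subn0 in c2.
have c1 := subset_leq_card s1.
have c3 := cardsU_le (P1 e S :|: Nf) Nn.
have c4 := cardsU_le (P1 e S) Nf.
have c5 : (#|Nf| <= deg (Fr F) x)%N by rewrite /deg; apply: leq_imset_card.
rewrite /Xc; lia.
Qed.

Lemma card_fst (T : finType) (x : T) : (#|[set p : T * T | p.1 == x]| <= #|T|)%N.
Proof.
apply: leq_trans (_ : #|[set (x, y) | y : T]| <= _)%N; last first.
  by apply: leq_trans (leq_imset_card _ _) _.
apply: subset_leq_card; apply/subsetP => -[u v]; rewrite inE /= => /eqP ->.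
by apply/imsetP; exists v.
Qed.

Lemma card_snd (T : finType) (x : T) : (#|[set p : T * T | p.2 == x]| <= #|T|)%N.
Proof.
apply: leq_trans (_ : #|[set (y, x) | y : T]| <= _)%N; last first.
  by apply: leq_trans (leq_imset_card _ _) _.
apply: subset_leq_card; apply/subsetP => -[u v]; rewrite inE /= => /eqP ->.
by apply/imsetP; exists u.
Qed.

Lemma connect_mono (T : finType) (F F' : {set T * T}) : F' \subset F ->
  forall u v, connect (Fr F') u v -> connect (Fr F) u v.
Proof.
move=> sFF' u v; apply: connect_sub => a b ab; apply: connect1.
by rewrite /Fr (subsetP sFF').
Qed.

Lemma Fdel_sub (T : finType) (F : {set T * T}) x : Fdel F x \subset F.
Proof. by apply/subsetP => p; rewrite inE => /andP[]. Qed.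

Lemma Qc_del (T : finType) S (F : {set T * T}) x :
  (Qc S F <= Qc (S :\ x) (Fdel F x) + 2 * #|T|)%N.
Proof.
set Q' := [set p : T * T | (p.1 \in S :\ x) && (p.2 \in S :\ x) && ~~ connect (Fr (Fdel F x)) p.1 p.2].
have s : [set p : T * T | (p.1 \in S) && (p.2 \in S) && ~~ connect (Fr F) p.1 p.2]
   \subset Q' :|: [set p : T * T | p.1 == x] :|: [set p : T * T | p.2 == x].
  apply/subsetP => -[u v]; rewrite !inE /= => /andP[/andP[uS vS] nc].
  case: (eqVneq u x) => [->|ux]; first by rewrite orbT.
  case: (eqVneq v x) => [->|vx]; first by rewrite orbT.
  rewrite /= uS vS /= orbF; apply/orP; left.
  by apply: contra nc; apply: connect_mono; apply: Fdel_sub.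
have c := subset_leq_card s.
have c1 := cardsU_le (Q' :|: [set p : T * T | p.1 == x]) [set p : T * T | p.2 == x].
have c2 := cardsU_le Q' [set p : T * T | p.1 == x].
have c3 := card_fst x; have c4 := card_snd x.
rewrite /Qc -/Q'; lia.
Qed.


Lemma domb_sym (T : finType) (e : rel T) S F : domb e S F -> symmetric (Fr F).
Proof.
move=> dom u v; rewrite /Fr; apply/idP/idP => H.
  by case: (dombP dom H).
by case: (dombP dom H).
Qed.

Definition Cr (T : finType) (A C : {set T}) :=
  [set p : T * T | ((p.1 \in A) && (p.2 \in C :\: A)) || ((p.1 \in C :\: A) && (p.2 \in A))].

Lemma Xc_cut (T : finType) (e : rel T) S F (A C : {set T}) : domb e S F ->
  (Xc e S (F :\: Cr A C) <= Xc e S F + 2 * e_between (Fr F) A (C :\: A))%N.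
Proof.
move=> dom.
set E1 := [set p : T * T | (p.1 \in A) && (p.2 \in C :\: A) && Fr F p.1 p.2].
set E2 := [set p : T * T | (p.1 \in C :\: A) && (p.2 \in A) && Fr F p.1 p.2].
have s1 : P2 e S (F :\: Cr A C) \subset P2 e S F :|: E1 :|: E2.
  apply/subsetP => -[u v]; rewrite !inE /= negb_and negbK.
  case/andP => /andP[/andP[euv uS] vS] /orP[uvC|uvF]; last by rewrite euv uS vS uvF.
  case uvF : ((u, v) \in F); last by rewrite euv uS vS.
  by rewrite /Fr uvF andbF /= !andbT.
have s2 : E2 \subset [set (p.2, p.1) | p in E1].
  apply/subsetP => -[u v]; rewrite !inE /= => /andP[/andP[vC uA] uvF].
  apply/imsetP; exists (v, u) => //; rewrite !inE /= uA vC /=.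
  by rewrite (domb_sym dom).
have c1 := subset_leq_card s1.
have c2 := cardsU_le (P2 e S F :|: E1) E2.
have c3 := cardsU_le (P2 e S F) E1.
have c4 := subset_leq_card s2.
have c5 := leq_imset_card (fun p : T * T => (p.2, p.1)) E1.
have -> : e_between (Fr F) A (C :\: A) = #|E1| by [].
have c45 := leq_trans c4 c5; rewrite /Xc; lia.
Qed.

Lemma Qc_cut (T : finType) (e : rel T) S F (A : {set T}) x0 :
  domb e S F -> A \subset component S (Fr F) x0 ->
  (Qc S F + 2 * (#|A| * #|component S (Fr F) x0 :\: A|)
     <= Qc S (F :\: Cr A (component S (Fr F) x0)))%N.
Proof.
move=> dom; set C := component S (Fr F) x0 => sAC.
have symF := domb_sym dom.
have csym : connect_sym (Fr F) := sym_connect_sym symF.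
have inC : forall y, y \in C -> (y \in S) /\ connect (Fr F) x0 y.
  by move=> y; rewrite inE => /andP[].
have inC' : forall y, y \in S -> connect (Fr F) x0 y -> y \in C.
  by move=> y yS cy; rewrite inE yS.
clearbody C.
have conC : forall u v, u \in C -> v \in C -> connect (Fr F) u v.
  move=> u v /inC[_ cu] /inC[_ cv]; apply: connect_trans cv.
  by rewrite csym.
have AC : forall u, u \in A -> u \in C by move=> u; apply: (subsetP sAC).
have clA : closed (Fr (F :\: Cr A C)) A.
  have H1 : forall u v, (u, v) \in F :\: Cr A C -> u \in A -> v \in A.
    move=> u v; rewrite !inE /= negb_or => /andP[/andP[n1 n2] uvF] uA.
    have [_ cu] := inC u (AC u uA).
    have [_ _ vS _] := dombP dom uvF.
    have vC : v \in C.
      apply: (inC' v vS); apply: connect_trans cu _; exact: connect1.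
    by apply: contraNT n1 => vA; rewrite uA vA vC.
  move=> u v uvF'; apply/idP/idP; first exact: H1 uvF'.
  apply: H1; move: uvF'; rewrite /Fr !inE /= => /andP[nc uvF].
  have [_ _ _ vuF] := dombP dom uvF.
  rewrite vuF andbT; move: nc; case: (u \in A); case: (v \in A); case: (u \in C); by case: (v \in C).
set Q := [set p : T * T | (p.1 \in S) && (p.2 \in S) && ~~ connect (Fr F) p.1 p.2].
set Q' := [set p : T * T | (p.1 \in S) && (p.2 \in S) && ~~ connect (Fr (F :\: Cr A C)) p.1 p.2].
set X1 := setX A (C :\: A).
set X2 := setX (C :\: A) A.
have s : Q :|: X1 :|: X2 \subset Q'.
  apply/subsetP => -[u v]; rewrite !inE /= => /orP[/orP[]|].
  - case/andP => /andP[-> ->] nc /=; apply: contra nc; apply: connect_mono.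
    by apply/subsetP => p; rewrite inE => /andP[].
  - case/andP => uA /andP[vA vC].
    have [uS _] := inC u (AC u uA); have [vS _] := inC v vC.
    rewrite uS vS /=; apply/negP => /(closed_connect clA).
    by rewrite uA (negbTE vA).
  - case/andP => /andP[uA uC] vA.
    have [uS _] := inC u uC; have [vS _] := inC v (AC v vA).
    rewrite uS vS /=; apply/negP => /(closed_connect clA).
    by rewrite vA (negbTE uA).
have d1 : [disjoint Q & X1].
  apply/pred0P => -[u v] /=; rewrite !inE /=.
  apply/negP => /andP[/andP[_ nc] /andP[uA /andP[_ vC]]].
  by move: nc; rewrite conC // AC.
have d2 : [disjoint Q :|: X1 & X2].
  apply/pred0P => -[u v] /=; rewrite !inE /=.
  apply/negP => /andP[/orP[/andP[_ nc]|/andP[uA /andP[vA _]]] /andP[/andP[uA' uC] vA']].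
    by move: nc; rewrite conC // AC.
  by rewrite uA in uA'.
have c := subset_leq_card s.
rewrite cardsU (disjoint_setI0 d2) cards0 subn0 in c.
rewrite cardsU (disjoint_setI0 d1) cards0 subn0 in c.
rewrite /X1 /X2 !cardsX in c.
rewrite /Qc -/Q -/Q'; lia.
Qed.

Lemma card_pairs (T : finType) (P : T -> T -> bool) :
  #|[set p : T * T | P p.1 p.2]| = (\sum_u #|[set v | P u v]|)%N.
Proof.
rewrite -sum1_card.
under [in RHS]eq_bigr => u _ do rewrite -sum1_card.
rewrite pair_big_dep /=; apply: eq_bigl => -[u v]; by rewrite !inE.
Qed.

Lemma Qc_le (T : finType) S (F : {set T * T}) : (Qc S F <= #|T| * #|T|)%N.
Proof. by rewrite /Qc -card_prod max_card. Qed.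

Lemma P1_lb (R : realFieldType) (T : finType) (e : rel T) (S : {set T}) (D : R) :
  (forall x, D <= (deg e x)%:R) ->
  (#|~: S|%:R * (D - #|~: S|%:R) <= (#|P1 e S|)%:R :> R).
Proof.
move=> Hd.
rewrite /P1 (card_pairs (fun u v => e u v && (u \notin S) && (v \in S))) natr_sum.
have H : forall u, (u \in ~: S)%:R * (D - #|~: S|%:R) <=
    (#|[set v | e u v && (u \notin S) && (v \in S)]|)%:R :> R.
  move=> u; case uS : (u \in ~: S); last by rewrite mul0r ler0n.
  rewrite mul1r lerBlDr -natrD; apply: le_trans (Hd u) _; rewrite ler_nat.
  apply: leq_trans (_ : #|[set v | e u v && (u \notin S) && (v \in S)] :|: ~: S| <= _)%N; last first.
    exact: cardsU_le.
  apply: subset_leq_card; apply/subsetP => v; rewrite !inE.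
  move: uS; rewrite inE => -> euv; rewrite euv /=; by case: (v \in S).
apply: le_trans (ler_sum _ (fun u _ => H u)).
rewrite -mulr_suml.
have -> : \sum_u ((u \in ~: S)%:R : R) = #|~: S|%:R.
  rewrite -sum1_card natr_sum [RHS]big_mkcond /=; apply: eq_bigr => u _; by case: (u \in ~: S).
by [].
Qed.

Lemma domb_del (T : finType) (e : rel T) S F x : domb e S F -> domb e (S :\ x) (Fdel F x).
Proof.
move=> dom; apply/forallP => -[u v]; apply/implyP; rewrite !inE /= => /andP[uvF /andP[ux vx]].
have [euv uS vS vuF] := dombP dom uvF.
by rewrite euv ux uS vx vS vuF.
Qed.

Lemma domb_cut (T : finType) (e : rel T) S F A C : domb e S F -> domb e S (F :\: Cr A C).
Proof.
move=> dom; apply/forallP => -[u v]; apply/implyP; rewrite !inE /= => /andP[nc uvF].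
have [euv uS vS vuF] := dombP dom uvF.
rewrite euv uS vS vuF andbT /=; move: nc.
by case: (u \in A); case: (v \in A); case: (u \in C); case: (v \in C).
Qed.

Lemma cardC_del (T : finType) (S : {set T}) x : x \in S -> #|~: (S :\ x)| = (#|~: S|).+1.
Proof. by move=> xS; rewrite setCD setUC cardsU1 inE xS. Qed.

Theorem lemma5p3 (R : realType) (eps beta : R) :
  0 < eps -> eps < 1 -> 0 < beta -> beta < eps / 400%:R ->
  exists k0 : nat, forall (k : nat) (a : R), (k0 <= k)%N -> 2^-1 <= a ->
  forall (T : finType) (e : rel T), simple_graph e ->
    (forall x : T, (a + eps) * k%:R <= (deg e x)%:R) ->
    (#|T|%:R <= 100%:R * k%:R :> R) ->
    exists (S : {set T}) (f : rel T),
      [/\ subgraph_of e S f,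
          (#|~: S|%:R <= 200%:R * beta * #|T|%:R :> R),
          (forall x, x \in S -> (a + eps - 400%:R * beta) * k%:R <= (deg f x)%:R) &
          (forall x, x \in S -> cut_dense (beta ^+ 2 / 20000%:R) f (component S f x))].
Proof.
move=> eps0 eps1 beta0 betaeps.
have beta1 : beta < 1.
  apply: lt_trans betaeps _; rewrite ltr_pdivrMr ?ltr0n // mul1r.
  by apply: lt_trans eps1 _; rewrite ltr1n.
have /andP[t2 t2'] : (Num.trunc (2 / beta))%:R <= 2 / beta < (Num.trunc (2 / beta)).+1%:R.
  by apply: trunc_itv; apply: divr_ge0 => //; apply: ltW.
exists (Num.trunc (2 / beta)).+1; move=> k a hk ha T e [esym eirr] Hdeg HT.
set rho := beta ^+ 2 / 20000%:R.
have rho0 : 0 < rho by rewrite divr_gt0 ?ltr0n // exprn_gt0.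
have bk2 : 2 < beta * k%:R.
  have : 2 / beta < k%:R by apply: lt_le_trans t2' _; rewrite ler_nat.
  by rewrite ltr_pdivrMr // mulrC.
set n := #|T|.
set D0 := (a + eps) * k%:R.
set c := D0 - 200%:R * beta * k%:R.
set M := Num.trunc (beta * k%:R).
have /andP[M1 M2] : M%:R <= beta * k%:R < M.+1%:R.
  by apply: trunc_itv; apply: ltW; apply: lt_trans bk2; rewrite ltr0n.
pose domz (z : {set T} * {set T * T}) := domb e z.1 z.2 && (#|~: z.1| <= M)%N.
pose Phi (z : {set T} * {set T * T}) : R :=
  (Xc e z.1 z.2)%:R - rho * (Qc z.1 z.2)%:R - c * (#|~: z.1|)%:R.
pose z0 := ([set: T], [set p : T * T | e p.1 p.2]).
have dz0 : domz z0.
  rewrite /domz /= setCT cards0 andbT; apply/forallP => -[u v]; apply/implyP.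
  by rewrite !inE /= => euv; rewrite euv esym.
have Phi0 : Phi z0 <= 0.
  rewrite /Phi /z0 /=.
  have -> : Xc e [set: T] [set p : T * T | e p.1 p.2] = 0%N.
    rewrite /Xc; have -> : P1 e [set: T] = set0 by apply/setP => p; rewrite !inE andbF.
    have -> : P2 e [set: T] [set p : T * T | e p.1 p.2] = set0.
      apply/setP => p; rewrite !inE /=; by case: (e p.1 p.2).
    by rewrite cards0.
  rewrite setCT cards0 mulr0 subr0 sub0r oppr_le0.
  by apply: mulr_ge0; [apply: ltW | apply: ler0n].
have [[S F] dz zmin] := exists_min Phi dz0.
move: dz; rewrite /domz /= => /andP[dom mM].
set m := #|~: S|.
have Phiz : Phi (S, F) <= 0 := le_trans (zmin z0 dz0) Phi0.
have mM' : m%:R <= M%:R :> R by rewrite ler_nat.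
have m0 : 0 <= m%:R :> R by apply: ler0n.
have Xlb : m%:R * (D0 - m%:R) <= (Xc e S F)%:R :> R.
  apply: le_trans (@P1_lb R T e S D0 Hdeg) _; rewrite ler_nat /Xc; apply: leq_addr.
have Qub : (Qc S F)%:R <= n%:R * n%:R :> R by rewrite -natrM ler_nat Qc_le.
have KB : m%:R * (200%:R * beta * k%:R - M%:R) <= rho * (n%:R * n%:R).
  have h1 : m%:R * (200%:R * beta * k%:R - M%:R) <= m%:R * (200%:R * beta * k%:R - m%:R).
    by apply: ler_wpM2l => //; rewrite lerB.
  have h2 : rho * (Qc S F)%:R <= rho * (n%:R * n%:R) by apply: ler_wpM2l => //; apply: ltW.
  move: Phiz; rewrite /Phi /= -/m => Phiz.
  rewrite /c in Phiz; nra.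
have bk0 : 0 < beta * k%:R by apply: lt_trans bk2.
have k0 : 0 < k%:R :> R.
  by move: bk0; rewrite pmulr_rgt0.
have n0 : 0 <= n%:R :> R by apply: ler0n.
have nn : n%:R * n%:R <= n%:R * (100%:R * k%:R) :> R by apply: ler_wpM2l.
have KB2 : m%:R * (199%:R * (beta * k%:R)) <= rho * (n%:R * (100%:R * k%:R)).
  have : m%:R * (199%:R * (beta * k%:R)) <= m%:R * (200%:R * beta * k%:R - M%:R).
    by apply: ler_wpM2l => //; lra.
  have : rho * (n%:R * n%:R) <= rho * (n%:R * (100%:R * k%:R)).
    by apply: ler_wpM2l => //; apply: ltW.
  lra.
have mb : m%:R <= 200%:R * beta * n%:R.
  have h : (199%:R * m%:R - beta * n%:R / 200%:R) * (beta * k%:R) <= 0.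
    move: KB2; rewrite /rho; set bk := beta * k%:R.
    have -> : beta ^+ 2 / 20000%:R * (n%:R * (100%:R * k%:R)) = beta * n%:R / 200%:R * bk.
      by rewrite /bk; field.
    lra.
  rewrite pmulr_lle0 // in h.
  have : 0 <= beta * n%:R by apply: mulr_ge0 => //; apply: ltW.
  lra.
have mltM : (m < M)%N.
  rewrite ltn_neqAle mM andbT; apply/negP => /eqP mME.
  move: KB2; rewrite mME => KB3.
  rewrite -natr1 in M2.
  have nn2 : n%:R * (100%:R * k%:R) <= 100%:R * k%:R * (100%:R * k%:R) :> R.
    by apply: ler_wpM2r => //; apply: mulr_ge0 => //; apply: ltW.
  have : rho * (n%:R * (100%:R * k%:R)) <= rho * (100%:R * k%:R * (100%:R * k%:R)).
    by apply: ler_wpM2l => //; apply: ltW.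
  have -> : rho * (100%:R * k%:R * (100%:R * k%:R)) = (beta * k%:R) * (beta * k%:R) / 2%:R.
    by rewrite /rho; field.
  move=> h.
  set bk := beta * k%:R in KB3 h M2 bk2 bk0.
  have X : M%:R * (199%:R * bk) <= bk * bk / 2%:R by lra.
  have Y : 0 < (M%:R - (bk - 1)) * bk by apply: mulr_gt0 => //; lra.
  nra.
have rn : rho * n%:R <= beta * k%:R.
  have : rho * n%:R <= rho * (100%:R * k%:R) by apply: ler_wpM2l => //; apply: ltW.
  have -> : rho * (100%:R * k%:R) = (beta / 200%:R) * (beta * k%:R) by rewrite /rho; field.
  have : beta / 200%:R * (beta * k%:R) <= 1 * (beta * k%:R).
    by apply: ler_wpM2r; [apply: ltW | lra].
  lra.
exists S, (Fr F); split.
- split; first exact: domb_sym dom.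
  split; first by move=> u v /(dombP dom) [].
  by move=> u v /(dombP dom) [_ -> ->].
- exact: mb.
- move=> x xS; rewrite leNgt; apply/negP => hd.
  have dw : domz (S :\ x, Fdel F x).
    by rewrite /domz /= domb_del //= cardC_del.
  have := zmin _ dw; rewrite /Phi /= cardC_del // -/m.
  have Xd : (Xc e (S :\ x) (Fdel F x))%:R <= (Xc e S F)%:R + (deg (Fr F) x)%:R :> R.
    by rewrite -natrD ler_nat; exact: Xc_del.
  have Qd : (Qc S F)%:R <= (Qc (S :\ x) (Fdel F x))%:R + 2%:R * n%:R :> R.
    by rewrite -natrM -natrD ler_nat; exact: Qc_del.
  have Qd' : rho * (Qc S F)%:R <= rho * ((Qc (S :\ x) (Fdel F x))%:R + 2%:R * n%:R).
    by apply: ler_wpM2l => //; apply: ltW.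
  rewrite /c /D0 in Phiz *.
  move=> h; nra.
- move=> x xS A sAC; rewrite leNgt; apply/negP => hc.
  set C := component S (Fr F) x in sAC hc *.
  have dw : domz (S, F :\: Cr A C).
    by rewrite /domz /= domb_cut //= mM.
  have := zmin _ dw; rewrite /Phi /= -/m.
  have Xd : (Xc e S (F :\: Cr A C))%:R <= (Xc e S F)%:R + 2%:R * (e_between (Fr F) A (C :\: A))%:R :> R.
    by rewrite -natrM -natrD ler_nat; exact: Xc_cut.
  have Qd : (Qc S F)%:R + 2%:R * (#|A|%:R * #|C :\: A|%:R) <= (Qc S (F :\: Cr A C))%:R :> R.
    by rewrite -!natrM -natrD ler_nat; exact: (Qc_cut dom sAC).
  have Qd' : rho * ((Qc S F)%:R + 2%:R * (#|A|%:R * #|C :\: A|%:R)) <= rho * (Qc S (F :\: Cr A C))%:R.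
    by apply: ler_wpM2l => //; apply: ltW.
  move=> h; nra.
Qed.
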